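(* Let $k\ge 2$ and let $G_1,\dots,G_k$ be vertex-disjoint graphs, $G_i$ of order $n_i\ge 3$, such that $G_1$ and $G_k$ each have at least one vertex of degree $n_i-1$ (adjacent to all other vertices of $G_i$), and each $G_i$ with $2\le i\le k-1$ has at least two vertices of degree $n_i-1$. Let $S(G_1,\dots,G_k)$ be the graph obtained from the disjoint union $G_1\cup\cdots\cup G_k$ by adding, for each $2\le i\le k$, one edge $e_i$ joining a vertex of degree $n_{i-1}-1$ in $G_{i-1}$ to a vertex of degree $n_i-1$ in $G_i$. Then $$D(S(G_1,\dots,G_k),x)=\prod_{i=1}^k D(G_i,x).$$ In particular, if $G_i=K_{n_i}$ with $n_i\ge 3$ for all $i$, then $D(S(K_{n_1},\dots,K_{n_k}),x)=\prod_{i=1}^k\big((1+x)^{n_i}-1\big)$.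
   Context: All graphs are finite and simple. For a graph $G$, a set $S\subseteq V(G)$ is dominating if every vertex of $V(G)\setminus S$ is adjacent to some vertex of $S$. Let $d(G,i)$ be the number of dominating sets of $G$ of cardinality $i$; the domination polynomial is $D(G,x)=\sum_{i=1}^{|V(G)|} d(G,i)x^i$. *)

(* Defs.v *)
From HB Require Import structures.
From mathcomp Require Import all_boot all_order all_algebra.
Set Implicit Arguments. Unset Strict Implicit. Unset Printing Implicit Defensive.
Import GRing.Theory.
Local Open Scope ring_scope.

Definition simple_graph (T : finType) (e : rel T) : Prop :=
  symmetric e /\ irreflexive e.

Definition deg (T : finType) (e : rel T) (v : T) : nat := #|[set w | e v w]|.

Definition dominating (T : finType) (e : rel T) (S : {set T}) : bool :=
  [forall v, (v \in S) || [exists u in S, e u v]].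

Definition dcount (T : finType) (e : rel T) (i : nat) : nat :=
  #|[set S : {set T} | dominating e S & #|S| == i]|.

Definition dompoly (T : finType) (e : rel T) : {poly int} :=
  \sum_(1 <= i < #|T|.+1) (dcount e i)%:R *: 'X^i.

(* The graph S(G_1,...,G_k): vertices = disjoint union {i : 'I_k & T i};
   edges = edges of each G_i, plus for every i with i.+1 < k (0-based) the
   edge joining a i in G_i to b (i+1) in G_(i+1). *)
Definition chain_rel (k : nat) (T : 'I_k -> finType) (e : forall i, rel (T i))
    (a b : forall i, T i) : rel {i : 'I_k & T i} :=
  fun x y =>
    if tag x == tag y then e (tag x) (tagged x) (tagged_as x y)
    else [|| [&& (tag y : nat) == (tag x).+1, tagged x == a (tag x)
                 & tagged y == b (tag y)]
           | [&& (tag x : nat) == (tag y).+1, tagged y == a (tag y)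
                 & tagged x == b (tag x)]].

Definition complete_rel (n : nat) : rel 'I_n := fun x y => x != y.

(* Main.v *)
Require Import Defs.
From HB Require Import structures.
From mathcomp Require Import all_boot all_order all_algebra.
Import GRing.Theory.
Local Open Scope ring_scope.

Set Implicit Arguments. Unset Strict Implicit.


Definition domsum (T : finType) (e : rel T) : {poly int} :=
  \sum_(S : {set T} | dominating e S) 'X^#|S|.

Lemma dom_nonempty (T : finType) (e : rel T) (S : {set T}) (v : T) :
  dominating e S -> S != set0.
Proof.
move=> /forallP /(_ v) /orP [vS|/existsP [u /andP [uS _]]];
  by apply/set0Pn; eexists; eauto.
Qed.

Lemma dompolyE (T : finType) (e : rel T) (v : T) : dompoly e = domsum e.
Proof.
rewrite /dompoly /domsum.
under eq_bigr => i _ do rewrite scaler_nat -sumr_const.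
rewrite (exchange_big_dep (fun S : {set T} => dominating e S)) /=; last first.
  by move=> i S _; rewrite inE => /andP [].
apply: eq_bigr => S domS.
rewrite (eq_bigl (fun i => i == #|S|)); last first.
  by move=> i /=; rewrite inE domS /= eq_sym.
rewrite (eq_bigr (fun i => 'X^#|S|)); last by move=> i /eqP ->.
rewrite big_nat1_eq ltnS max_card andbT.
case: ifP => // /negbT; rewrite -ltnNge ltnS leqn0 cards_eq0 => /eqP S0.
by move: (dom_nonempty v domS); rewrite S0 eqxx.
Qed.

Lemma univ (T : finType) (e : rel T) v : irreflexive e ->
  deg e v = (#|T| - 1)%N -> forall w, w != v -> e v w.
Proof.
move=> irr hd w wv.
have sub : [set w | e v w] \subset [set~ v].
  apply/subsetP => x; rewrite !inE; apply: contraL => /eqP ->; by rewrite irr.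
have hc : #|[set w | e v w]| = #|[set~ v]| by rewrite cardsC1 -subn1 -hd.
move/(subset_cardP hc): sub => eqAB.
by have := eqAB w; rewrite !inE wv.
Qed.

Unset Implicit Arguments.


Section Chain.
Variables (k : nat) (T : 'I_k -> finType) (e : forall i, rel (T i)) (a b : forall i, T i).
Local Notation V := {i : 'I_k & T i}.
Definition tg (i : 'I_k) (t : T i) : V := Tagged (fun j => T j) t.
Arguments tg {i}.
Definition restr (i : 'I_k) (S : {set V}) : {set T i} := [set t | tg t \in S].

Lemma tg_inj i : injective (@tg i).
Proof.
move=> x y h; have := congr1 (tagged_as (tg x)) h.
by rewrite /tg !tagged_asE.
Qed.

Hypothesis simple : forall i : 'I_k, simple_graph (e i).
Hypothesis card3 : forall i : 'I_k, (3 <= #|T i|)%N.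
Hypothesis ha : forall i : 'I_k, (i.+1 < k)%N -> deg (e i) (a i) = (#|T i| - 1)%N.
Hypothesis hb : forall i : 'I_k, (0 < i)%N -> deg (e i) (b i) = (#|T i| - 1)%N.

Lemma three (i : 'I_k) : exists w : T i, (w != a i) && (w != b i).
Proof.
case: (pickP (fun w => (w != a i) && (w != b i))) => [w h|H]; first by exists w.
exfalso.
have : (#|T i| <= #|[set a i; b i]|)%N.
  apply: subset_leq_card; apply/subsetP => x _; rewrite !inE.
  by have := H x; rewrite /= => /negbT; rewrite negb_and !negbK.
rewrite cards2; case: (_ == _) => /=; move: (card3 i); case: #|T i| => [|[|[|]]] //.
Qed.

Lemma dom_chain (S : {set V}) :
  dominating (chain_rel e a b) S = [forall i, dominating (e i) (restr i S)].
Proof.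
apply/idP/idP.
- move=> /forallP domS; apply/forallP => i.
  have ne : restr i S != set0.
    apply/negP => /eqP r0.
    have [w /andP [wa wb]] := three i.
    have := domS (tg w); case/orP => [wS|].
      have : w \in restr i S by rewrite inE.
      by rewrite r0 inE.
    case/existsP => -[j u0] /andP [uS].
    rewrite /chain_rel /=; case: eqP => [ji|ji].
      subst j => _; have : u0 \in restr i S by rewrite inE.
      by rewrite r0 inE.
    by rewrite (negPf wa) (negPf wb) !andbF.
  case/set0Pn: ne => s0 s0S.
  apply/forallP => t; case tS: (t \in restr i S) => //=.
  have := domS (tg t); rewrite (_ : tg t \in S = false); last by rewrite -tS inE.
  case/existsP => -[j u0] /andP [uS]; rewrite /chain_rel /=.
  case: eqP => [ji|ji].
    subst j => hu; apply/existsP; exists u0; rewrite inE uS /=.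
    by move: hu; rewrite /tg tagged_asE.
  have univt : (t == a i) && (i.+1 < k)%N || (t == b i) && (0 < i)%N ->
      exists u, (u \in restr i S) && e i u t.
    move=> H; exists s0; rewrite s0S /=.
    have st : s0 != t by apply: contraFN tS => /eqP <-.
    have [sym irr] := simple i.
    rewrite sym; case/orP: H => /andP [/eqP tE lt]; rewrite tE in st *.
      exact: (univ irr (ha i lt)).
    exact: (univ irr (hb i lt)).
  move=> H; apply/existsP; apply: univt.
  case/orP: H => /and3P [/eqP h1 h2 h3].
    by rewrite h3 h1 /= orbT.
  by rewrite h2 -h1 ltn_ord.
- move=> /forallP H; apply/forallP => -[i t].
  have := H i => /forallP /(_ t) /orP [tS|/existsP [u /andP [uS eut]]].
    by move: tS; rewrite inE => ->.
  apply/orP; right; apply/existsP; exists (tg u).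
  rewrite inE in uS; rewrite uS /= /chain_rel /= eqxx.
  by rewrite (@tagged_asE _ (fun j => T j) (tg u) t).
Qed.

Definition Fi (i : 'I_k) : {set V} := [set x : V | tag x == i].
Definition Qd (i : 'I_k) : pred {set V} :=
  fun B => (B \subset Fi i) && dominating (e i) (restr i B).

Lemma restr_img i (A : {set T i}) : restr i (tg @: A) = A.
Proof. by apply/setP => t; rewrite inE (mem_imset _ _ (@tg_inj i)). Qed.

Lemma img_restr i (B : {set V}) : B \subset Fi i -> tg @: restr i B = B.
Proof.
move=> /subsetP sB; apply/setP => -[j u]; apply/imsetP/idP.
  by case=> t; rewrite inE => tS ->.
move=> uB; have := sB _ uB; rewrite inE /= => /eqP ji; subst j.
by exists u; rewrite ?inE.
Qed.

Lemma step1 i : domsum (e i) = \sum_(B : {set V} | Qd i B) 'X^#|B|.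
Proof.
symmetry; rewrite (reindex_onto (fun A : {set T i} => tg @: A) (restr i)) /=; last first.
  by move=> B /andP [sB _]; exact: img_restr.
rewrite /domsum; apply: eq_big => [A|A _]; last by rewrite card_imset //; exact: tg_inj.
rewrite /Qd restr_img eqxx andbT.
have -> : tg @: A \subset Fi i.
  by apply/subsetP => x /imsetP [t _ ->]; rewrite inE.
done.
Qed.

Lemma restrI i S : restr i (S :&: Fi i) = restr i S.
Proof. by apply/setP => t; rewrite !inE /= eqxx andbT. Qed.

Lemma card_split (S : {set V}) : #|S| = (\sum_i #|S :&: Fi i|)%N.
Proof.
rewrite -sum1_card (partition_big (fun x : V => tag x) predT) //=.
apply: eq_bigr => i _; rewrite -sum1_card; apply: eq_bigl => x.
by rewrite !inE.
Qed.

Lemma prod_dom :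
  \sum_(S : {set V} | [forall i, dominating (e i) (restr i S)]) 'X^#|S|
  = \prod_i domsum (e i).
Proof.
under [RHS]eq_bigr => i _ do rewrite step1.
rewrite bigA_distr_big_dep.
symmetry; rewrite (reindex_onto (fun S : {set V} => [ffun i => S :&: Fi i])
   (fun f => \bigcup_i f i)) /=; last first.
  move=> f /familyP fQ; apply/ffunP => i; rewrite ffunE; apply/setP => x.
  rewrite !inE; apply/andP/idP.
    case=> /bigcupP [j _ xj] /eqP xi.
    have := fQ j; rewrite /Qd /= => /andP [/subsetP sj _].
    by have := sj _ xj; rewrite inE xi => /eqP ->.
  move=> xi; split; first by apply/bigcupP; exists i.
  by have := fQ i; rewrite /Qd /= => /andP [/subsetP si _]; have := si _ xi; rewrite inE.
apply: eq_big => [S|S _].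
  have -> : \bigcup_i [ffun i => S :&: Fi i] i = S.
    apply/setP => x; apply/bigcupP/idP.
      by case=> i _; rewrite ffunE inE => /andP [].
    by move=> xS; exists (tag x) => //; rewrite ffunE !inE xS eqxx.
  rewrite eqxx andbT; apply/familyP/forallP => H i; have := H i;
    by rewrite /Qd /= ffunE unfold_in /= restrI subsetIr.
rewrite prodrXr card_split; congr ('X^_); apply: eq_bigr => i _.
by rewrite ffunE.
Qed.
End Chain.


Lemma sumsets (T : finType) :
  \sum_(S : {set T}) 'X^#|S| = (1 + 'X)^+#|T| :> {poly int}.
Proof.
rewrite addrC exprD1n.
rewrite (partition_big (fun S : {set T} => (Ordinal (max_card (mem S) : (#|S| < #|T|.+1)%N))) predT) //=.
apply: eq_bigr => j _.
rewrite (eq_bigr (fun _ => 'X^j)); last by move=> S /eqP <-.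
rewrite sumr_const -card_draws; congr (_ *+ _); apply: eq_card => S.
by rewrite !inE unfold_in.
Qed.

Lemma domsum_complete n : (0 < n)%N -> domsum (@complete_rel n) = (1 + 'X)^+n - 1.
Proof.
case: n => // n _.
rewrite /domsum (eq_bigl (fun S => S != set0)); last first.
  move=> S; apply/idP/idP => [|/set0Pn [u uS]].
    by move=> h; exact: (dom_nonempty ord0 h).
  apply/forallP => v; case vS: (v \in S) => //=; apply/existsP; exists u.
  by rewrite uS /complete_rel /=; apply: contraFN vS => /eqP <-.
have H := sumsets ('I_n.+1 : finType); rewrite card_ord in H.
rewrite -H [in RHS](bigD1 set0) //=.
have -> : #|@set0 (ordinal n.+1)| = 0%N by apply: cards0.
by rewrite expr0 addrAC subrr add0r.
Qed.

Lemma part1 (k : nat) (hk : (2 <= k)%N) :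
  (forall (T : 'I_k -> finType) (e : forall i, rel (T i)) (a b : forall i, T i),
     (forall i, simple_graph (e i)) ->
     (forall i, (3 <= #|T i|)%N) ->
     (forall i : 'I_k, (i : nat) = 0%N \/ (i : nat) = k.-1 ->
        exists v : T i, deg (e i) v = (#|T i| - 1)%N) ->
     (forall i : 'I_k, (0 < i)%N -> (i < k.-1)%N ->
        exists u v : T i, u != v /\ deg (e i) u = (#|T i| - 1)%N
                          /\ deg (e i) v = (#|T i| - 1)%N) ->
     (forall i : 'I_k, (i.+1 < k)%N -> deg (e i) (a i) = (#|T i| - 1)%N) ->
     (forall i : 'I_k, (0 < i)%N -> deg (e i) (b i) = (#|T i| - 1)%N) ->
     dompoly (chain_rel e a b) = \prod_(i < k) dompoly (e i))
.
Proof.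
move=> T e a b simple card3 _ _ ha hb.
have el i : exists x : T i, true.
  by move: (card3 i); case/card_gt0P: (leq_trans (isT : (0 < 3)%N) (card3 i)) => x; exists x.
have i0 : 'I_k by exists 0%N; apply: leq_trans hk.
have [x0 _] := el i0.
rewrite (dompolyE _ (Tagged (fun j => T j) x0)) /domsum.
rewrite (eq_bigl _ _ (@dom_chain k T e a b simple card3 ha hb)) prod_dom.
apply: eq_bigr => i _; have [x _] := el i.
by rewrite (dompolyE _ x).
Qed.

Theorem mainTheorem7 (k : nat) (hk : (2 <= k)%N) :
  (forall (T : 'I_k -> finType) (e : forall i, rel (T i)) (a b : forall i, T i),
     (forall i, simple_graph (e i)) ->
     (forall i, (3 <= #|T i|)%N) ->
     (* G_1 and G_k each have a vertex of degree n_i - 1 *)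
     (forall i : 'I_k, (i : nat) = 0%N \/ (i : nat) = k.-1 ->
        exists v : T i, deg (e i) v = (#|T i| - 1)%N) ->
     (* each inner G_i has at least two vertices of degree n_i - 1 *)
     (forall i : 'I_k, (0 < i)%N -> (i < k.-1)%N ->
        exists u v : T i, u != v /\ deg (e i) u = (#|T i| - 1)%N
                          /\ deg (e i) v = (#|T i| - 1)%N) ->
     (* endpoints of the added edges e_i have full degree *)
     (forall i : 'I_k, (i.+1 < k)%N -> deg (e i) (a i) = (#|T i| - 1)%N) ->
     (forall i : 'I_k, (0 < i)%N -> deg (e i) (b i) = (#|T i| - 1)%N) ->
     dompoly (chain_rel e a b) = \prod_(i < k) dompoly (e i))
  /\
  (forall (n : 'I_k -> nat) (a b : forall i, 'I_(n i)),
     (forall i, (3 <= n i)%N) ->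
     dompoly (chain_rel (T := fun i => 'I_(n i)) (fun i => @complete_rel (n i)) a b)
       = \prod_(i < k) ((1 + 'X) ^+ n i - 1)).

Proof.
split; first exact: part1.
move=> n a b hn.
have deg_full i (v : 'I_(n i)) : deg (@complete_rel (n i)) v = (#|'I_(n i)| - 1)%N.
  rewrite /deg subn1 -(cardsC1 v); apply: eq_card => w.
  by rewrite !inE /complete_rel eq_sym.
have h0 i : (0 < n i)%N by apply: leq_trans (hn i).
have h1 i : (1 < n i)%N by apply: leq_trans (hn i).
rewrite (@part1 k hk (fun i => 'I_(n i)) (fun i => @complete_rel (n i)) a b).
- apply: eq_bigr => i _.
  by rewrite (dompolyE _ (Ordinal (h0 i))) domsum_complete.
- move=> i; split; first by move=> x y; rewrite /complete_rel eq_sym.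
  by move=> x; rewrite /complete_rel eqxx.
- by move=> i; rewrite card_ord.
- by move=> i _; exists (Ordinal (h0 i)); apply: deg_full.
- move=> i _ _; exists (Ordinal (h0 i)), (Ordinal (h1 i)); split => //.
  by split; apply: deg_full.
- by move=> i _; apply: deg_full.
- by move=> i _; apply: deg_full.
Qed.
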